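(* Let $k\ge1$, $a_0,a_1,\dots,a_m\in\mathbb{R}^{2k}$, and let $p(x)=a_m\circledast x^m+a_{m-1}\circledast x^{m-1}+\dots+a_1\circledast x+a_0$ for $x\in\mathbb{R}^{2k}$, where $x^j$ denotes the $j$-fold $\circledast$-product of $x$ with itself. Writing $p=[p_1,\dots,p_{2k}]$, each component $p_j$ is a harmonic polynomial on $\mathbb{R}^{2k}$, i.e. a real polynomial in $x_1,\dots,x_{2k}$ with $\sum_{i=1}^{2k}\partial^2p_j/\partial x_i^2=0$.
   Context: Let $n=2k$ and let $\mathfrak g$ be the real $n\times n$ matrix with $\mathfrak g_{i,i+1}=1$ ($1\le i\le n-1$), $\mathfrak g_{n,1}=-1$, other entries $0$. For $u\in\mathbb{R}^n$ set $\varsigma(u)=\sum_{\ell=1}^n u_\ell\mathfrak g^{\ell-1}$ and $u\circledast v=\varsigma^{-1}(\varsigma(u)\varsigma(v))$; this is a commutative associative algebra with identity $e_1$. *)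

(* Defs.v *)
From HB Require Import structures.
From mathcomp Require Import all_boot all_order all_algebra.
From mathcomp Require Import mpoly.
Set Implicit Arguments. Unset Strict Implicit. Unset Printing Implicit Defensive.
Import Order.TTheory GRing.Theory Num.Theory.
Local Open Scope ring_scope.

Section Circ.
Variable R : comNzRingType.
Variable n : nat.

(* the matrix g: g_{i,i+1} = 1, g_{n,1} = -1 (0-based indices here) *)
Definition gmat : 'M[R]_n :=
  \matrix_(i, j) (if (j : nat) == (i : nat).+1 then 1
                  else if ((i : nat) == n.-1) && ((j : nat) == 0%N) then -1 else 0).

Definition gpow (l : nat) : 'M[R]_n := iter l (mulmx gmat) 1%:M.

Definition vsig (u : 'rV[R]_n) : 'M[R]_n := \sum_(l < n) u 0 l *: gpow l.

Definition e1 : 'rV[R]_n := \row_j (if (j : nat) == 0%N then 1 else 0).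

(* varsigma^{-1}: varsigma(u) has first row u, so on the image of varsigma
   the inverse is "take the first row", i.e. M |-> e_1 M. *)
Definition vsig_inv (M : 'M[R]_n) : 'rV[R]_n := e1 *m M.

Definition circ (u v : 'rV[R]_n) : 'rV[R]_n := vsig_inv (vsig u *m vsig v).

Definition cpow (x : 'rV[R]_n) (j : nat) : 'rV[R]_n := iter j (circ x) e1.

Definition cpoly (m : nat) (a : 'I_m.+1 -> 'rV[R]_n) (x : 'rV[R]_n) : 'rV[R]_n :=
  \sum_(i < m.+1) circ (a i) (cpow x i).

Definition mlaplacian (P : {mpoly R[n]}) : {mpoly R[n]} :=
  \sum_(i < n) (P^`M(i))^`M(i).

Definition harmonic_poly (f : 'rV[R]_n -> R) : Prop :=
  exists P : {mpoly R[n]},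
    (forall x : 'rV[R]_n, f x = P.@[fun i => x 0 i]) /\ mlaplacian P = 0.
End Circ.

(* Main.v *)
Require Import Defs.
From HB Require Import structures.
From mathcomp Require Import all_boot all_order all_algebra.
From mathcomp Require Import mpoly zify.
Set Implicit Arguments. Unset Strict Implicit. Unset Printing Implicit Defensive.
Import Order.TTheory GRing.Theory Num.Theory.
Local Open Scope ring_scope.

Section Gen.
Variable T : comNzRingType.
Variable n : nat.
Local Notation G := (gmat T n).
Local Notation gp := (gpow T n).
Local Notation E1 := (e1 T n).

Lemma gpowS l : gp l.+1 = G *m gp l. Proof. by []. Qed.
Lemma gpow0 : gp 0 = 1%:M. Proof. by []. Qed.

Lemma gpow_comm l : G *m gp l = gp l *m G.
Proof.
elim: l => [|l IH]; first by rewrite gpow0 mulmx1 mul1mx.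
by rewrite gpowS -mulmxA -IH.
Qed.

Lemma comm_gpow (M : 'M[T]_n) : G *m M = M *m G -> forall l, gp l *m M = M *m gp l.
Proof.
move=> hM; elim=> [|l IH]; first by rewrite gpow0 mulmx1 mul1mx.
by rewrite gpowS -mulmxA IH mulmxA hM -mulmxA.
Qed.

Lemma gpowD a b : gp (a + b) = gp a *m gp b.
Proof.
elim: a => [|a IH]; first by rewrite add0n gpow0 mul1mx.
by rewrite addSn gpowS IH mulmxA.
Qed.

Lemma vsig_comm u : G *m vsig u = vsig u *m G.
Proof.
rewrite /vsig mulmx_sumr mulmx_suml; apply: eq_bigr => l _.
by rewrite -scalemxAr -scalemxAl gpow_comm.
Qed.

Lemma gpow_vsig_comm l u : gp l *m vsig u = vsig u *m gp l.
Proof. exact: comm_gpow (vsig_comm u) l. Qed.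

Lemma e1_gpow l (hl : (l < n)%N) : E1 *m gp l = delta_mx 0 (Ordinal hl).
Proof.
elim: l hl => [|l IH] hl.
  rewrite gpow0 mulmx1; apply/rowP => j; rewrite !mxE /= -val_eqE /=.
  by case: eqP.
have hl' : (l < n)%N by apply: ltnW.
rewrite gpowS gpow_comm mulmxA (IH hl') -rowE; apply/rowP => j; rewrite !mxE /=.
have -> : (l == n.-1) = false.
  by apply/negbTE; apply/eqP => e; move: hl; rewrite e; case: (n) => //= n' ; rewrite ltnn.
rewrite andFb -val_eqE /=; by case: eqP.
Qed.

Lemma e1_ord (i : 'I_n) : delta_mx 0 i = E1 *m gp i.
Proof. rewrite (e1_gpow (ltn_ord i)); congr delta_mx; exact: val_inj. Qed.

Hypothesis n0 : (0 < n)%N.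

Lemma gpow_n : gp n = - 1%:M.
Proof.
have hn1 : (n.-1 < n)%N by rewrite prednK.
have hlast : E1 *m gp n = - E1.
  have -> : gp n = gp (n.-1).+1 by rewrite prednK.
  rewrite gpowS gpow_comm mulmxA (e1_gpow hn1) -rowE.
  apply/rowP => j; rewrite !mxE /= eqxx andTb.
  have -> : ((j : nat) == n.-1.+1) = false.
    by rewrite prednK //; apply/negbTE; rewrite neq_ltn ltn_ord.
  by case: ((j : nat) == 0%N); rewrite ?oppr0.
apply/row_matrixP => i; rewrite !rowE e1_ord -mulmxA -gpowD addnC gpowD mulmxA hlast.
by rewrite mulNmx mulmxN mulmx1.
Qed.

Lemma e1_vsig w : E1 *m vsig w = w.
Proof.
rewrite /vsig mulmx_sumr [RHS]row_sum_delta; apply: eq_bigr => l _.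
by rewrite -scalemxAr e1_ord.
Qed.

Lemma vsig_e1K (M : 'M[T]_n) : G *m M = M *m G -> vsig (E1 *m M) = M.
Proof.
move=> hM; apply/row_matrixP => i; rewrite !rowE e1_ord -!mulmxA.
rewrite gpow_vsig_comm mulmxA e1_vsig (comm_gpow hM) mulmxA; done.
Qed.

Lemma vsig_circ (u v : 'rV[T]_n) : vsig (circ u v) = vsig u *m vsig v.
Proof.
rewrite /circ /vsig_inv vsig_e1K //.
by rewrite mulmxA vsig_comm -mulmxA vsig_comm mulmxA.
Qed.

Definition mpow (V : 'M[T]_n) j := iter j (mulmx V) 1%:M.

Lemma vsig_cpow (x : 'rV[T]_n) j : vsig (cpow x j) = mpow (vsig x) j.
Proof.
elim: j => [|j IH] /=.
  by rewrite -[e1 T n]mulmx1 vsig_e1K // mulmx1 mul1mx.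
by rewrite vsig_circ IH.
Qed.

Lemma vsig_sum (I : Type) (r : seq I) (P : pred I) (F : I -> 'rV[T]_n) :
  vsig (\sum_(i <- r | P i) F i) = \sum_(i <- r | P i) vsig (F i).
Proof.
rewrite /vsig; under eq_bigr do rewrite summxE scaler_suml.
by rewrite exchange_big.
Qed.

Lemma cpolyE m (a : 'I_m.+1 -> 'rV[T]_n) x :
  cpoly a x = E1 *m \sum_(i < m.+1) vsig (a i) *m mpow (vsig x) i.
Proof.
rewrite -[LHS]e1_vsig /cpoly vsig_sum; congr (_ *m _); apply: eq_bigr => i _.
by rewrite vsig_circ vsig_cpow.
Qed.

End Gen.

Section Map.
Variables (T U : comNzRingType) (n : nat) (f : {rmorphism T -> U}).

Lemma map_gmat : map_mx f (gmat T n) = gmat U n.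
Proof.
apply/matrixP => i j; rewrite !mxE.
case: ifP => _; first by rewrite rmorph1.
by case: ifP => _; rewrite ?rmorphN1 ?rmorph0.
Qed.

Lemma map_gpow l : map_mx f (gpow T n l) = gpow U n l.
Proof.
elim: l => [|l IH]; first by rewrite !gpow0 map_mx1.
by rewrite !gpowS map_mxM IH map_gmat.
Qed.

Lemma map_e1 : map_mx f (e1 T n) = e1 U n.
Proof. by apply/rowP => j; rewrite !mxE; case: ifP; rewrite ?rmorph1 ?rmorph0. Qed.

Lemma map_vsig (u : 'rV[T]_n) : map_mx f (vsig u) = vsig (map_mx f u).
Proof.
rewrite /vsig map_mx_sum; apply: eq_bigr => l _.
by rewrite map_mxZ map_gpow mxE.
Qed.

Lemma map_mpow (V : 'M[T]_n) j : map_mx f (mpow V j) = mpow (map_mx f V) j.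
Proof.
elim: j => [|j IH] /=; first by rewrite map_mx1.
by rewrite map_mxM IH.
Qed.
End Map.

Section Deriv.
Variables (T : comNzRingType) (n : nat).
Local Notation S := {mpoly T[n]}.
Local Notation C := (map_mx (@mpolyC n T)).
Local Notation dm i := (map_mx (mderiv i)).

Lemma dmM i p q r (A : 'M[S]_(p, q)) (B : 'M[S]_(q, r)) :
  dm i (A *m B) = dm i A *m B + A *m dm i B.
Proof.
apply/matrixP => a b; rewrite !mxE raddf_sum -big_split; apply: eq_bigr => k _.
by rewrite !mxE; apply: mderivM.
Qed.

Lemma dmZ i p q (c : S) (A : 'M[S]_(p, q)) :
  dm i (c *: A) = mderiv i c *: A + c *: dm i A.
Proof. by apply/matrixP => a b; rewrite !mxE mderivM. Qed.

Lemma dmC i p q (M : 'M[T]_(p, q)) : dm i (C M) = 0.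
Proof. by apply/matrixP => a b; rewrite !mxE mderivC. Qed.

Lemma dmCM i p q r (M : 'M[T]_(p, q)) (B : 'M[S]_(q, r)) :
  dm i (C M *m B) = C M *m dm i B.
Proof. by rewrite dmM dmC mul0mx add0r. Qed.

Lemma gpowC l : gpow S n l = C (gpow T n l).
Proof. by rewrite (map_gpow _ (@mpolyC n T)). Qed.

Lemma dm_gpow i l : dm i (gpow S n l) = 0.
Proof. by rewrite gpowC dmC. Qed.

Lemma dm_vsig i (u : 'rV[S]_n) : dm i (vsig u) = vsig (dm i u).
Proof.
rewrite /vsig map_mx_sum; apply: eq_bigr => l _.
by rewrite dmZ dm_gpow scaler0 addr0 mxE.
Qed.

Definition Xrow : 'rV[S]_n := \row_l 'X_l.

Lemma dm_Xrow i : dm i Xrow = delta_mx 0 i.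
Proof.
apply/rowP => l; rewrite !mxE mderivX mnm1E /=.
case: eqP => [->|_]; last by rewrite scale0r.
have -> : (U_(i) - U_(i))%MM = 0%MM by apply/mnmP => t; rewrite mnmBE mnm0E subnn.
by rewrite mpolyX0 scale1r.
Qed.

Lemma dmnat i (j : nat) : mderiv i (j%:R : S) = 0.
Proof. by rewrite -mpolyC_nat mderivC. Qed.

Lemma mpow_comm (V W : 'M[S]_n) : W *m V = V *m W -> forall j, W *m mpow V j = mpow V j *m W.
Proof.
move=> h; elim => [|j IH] /=; first by rewrite mulmx1 mul1mx.
by rewrite mulmxA h -mulmxA IH mulmxA.
Qed.

Lemma dm_mpow i (V W : 'M[S]_n) : dm i V = W -> W *m V = V *m W ->
  forall j, dm i (mpow V j) = j%:R *: (mpow V j.-1 *m W).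
Proof.
move=> hV hW; elim => [|j IH].
  by rewrite /= -(map_mx1 (@mpolyC n T)) dmC scale0r.
rewrite /= dmM hV IH.
case: j IH => [|j] IH /=.
  by rewrite scale0r mulmx0 addr0 mul1mx mulmx1 scale1r.
have hc := mpow_comm hW j.+1; rewrite /= in hc.
rewrite -scalemxAr !mulmxA -[W *m V *m _]mulmxA hc -[X in X + _]scale1r -scalerDl.
by rewrite [in RHS]mulrS.
Qed.

Lemma dm2_mpow i (V W : 'M[S]_n) : dm i V = W -> W *m V = V *m W -> dm i W = 0 ->
  forall j, dm i (dm i (mpow V j)) = (j%:R * j.-1%:R) *: (mpow V j.-2 *m (W *m W)).
Proof.
move=> hV hW hW0 j; rewrite (dm_mpow hV hW) dmZ dmnat scale0r add0r dmM hW0 mulmx0 addr0.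
by rewrite (dm_mpow hV hW) -scalemxAl scalerA mulmxA.
Qed.

Lemma sum_gpow2 k : (0 < k)%N -> n = (k + k)%N ->
  \sum_(i < n) (gpow T n i *m gpow T n i) = 0.
Proof.
move=> k0 hn.
have n0 : (0 < n)%N by rewrite hn addn_gt0 k0.
rewrite -(big_mkord xpredT (fun i : nat => gpow T n i *m gpow T n i)).
rewrite (@big_cat_nat _ _ _ k) //=; last by rewrite hn leq_addr.
rewrite (big_addn 0 n k).
have -> : (n - k = k)%N by rewrite hn addnK.
rewrite [X in _ + X](_ : _ = - \sum_(0 <= i < k) gpow T n i *m gpow T n i) ?addrN //.
rewrite -sumrN; apply: eq_bigr => i _.
rewrite -!gpowD (_ : (i + k + (i + k) = i + i + n)%N); last by rewrite hn; lia.
by rewrite gpowD gpow_n // mulmxN mulmx1.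
Qed.

End Deriv.

Lemma mevalCmx (T : comNzRingType) n p q (v : 'I_n -> T) (M : 'M[T]_(p, q)) :
  map_mx (meval v) (map_mx (@mpolyC n T) M) = M.
Proof. by apply/matrixP => a b; rewrite !mxE mevalC. Qed.

Lemma vsig_delta (T : comNzRingType) n (i : 'I_n) : vsig (delta_mx 0 i) = gpow T n i.
Proof. by rewrite e1_ord vsig_e1K // gpow_comm. Qed.

Theorem mainTheorem10 (R : realFieldType) (k : nat) (hk : (1 <= k)%N)
    (m : nat) (a : 'I_m.+1 -> 'rV[R]_(2 * k)) :
  forall j : 'I_(2 * k), harmonic_poly (fun x => cpoly a x 0 j).
Proof.
move=> j.
pose C := map_mx (@mpolyC (2 * k) R).
pose V := vsig (Xrow R (2 * k)).
pose Q := C 1 _ (e1 R (2 * k)) *m \sum_(i < m.+1) C _ _ (vsig (a i)) *m mpow V i.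
exists (Q 0 j); split.
  move=> x.
  have -> : (Q 0 j).@[fun i => x 0 i] = map_mx (meval (fun i => x 0 i)) Q 0 j by rewrite [RHS]mxE.
  rewrite /Q map_mxM mevalCmx cpolyE map_mx_sum.
  apply: (congr1 (fun M => (e1 R (2 * k) *m M) 0 j)); apply: eq_bigr => i _.
  rewrite map_mxM mevalCmx map_mpow map_vsig; congr (_ *m mpow (vsig _) _).
  by apply/rowP => l; rewrite !mxE; symmetry; apply: mevalXU.
rewrite /mlaplacian.
transitivity ((\sum_(i < 2 * k) map_mx (mderiv i) (map_mx (mderiv i) Q)) 0 j).
  by rewrite summxE; apply: eq_bigr => i _; rewrite !mxE.
suff -> : \sum_(i < 2 * k) map_mx (mderiv i) (map_mx (mderiv i) Q) = 0 by rewrite mxE.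
have hQ : forall i : 'I_(2 * k), map_mx (mderiv i) (map_mx (mderiv i) Q) =
   C 1 _ (e1 R (2 * k)) *m \sum_(l < m.+1) C _ _ (vsig (a l)) *m
     ((l%:R * l.-1%:R) *: (mpow V l.-2 *m (gpow _ (2 * k) i *m gpow _ (2 * k) i))).
  move=> i; rewrite /Q !dmCM !map_mx_sum; congr (_ *m _); apply: eq_bigr => l _.
  rewrite !dmCM (@dm2_mpow _ _ i V (gpow _ (2 * k) i)) //.
  - by rewrite /V dm_vsig dm_Xrow vsig_delta.
  - exact: gpow_vsig_comm.
  - exact: dm_gpow.
under eq_bigr do rewrite hQ.
rewrite -mulmx_sumr exchange_big /= big1 ?mulmx0 // => l _.
rewrite -mulmx_sumr -scaler_sumr -mulmx_sumr (@sum_gpow2 _ _ k) ?mulmx0 ?scaler0 ?mulmx0 //.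
lia.
Qed.
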